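(* Let $\mathcal{S}$ be either of the calculi $\mathcal{M}'_{2018}$ or $\mathcal{M}'^{-}_{2018}$ defined below. Let $\xi,\zeta$ be stoups, $\Pi,\Gamma_1,\Gamma_2$ finite sequences of tree terms, $A,C$ formulae and $\Xi(\cdot)$ a meta-formula context (all in the language of $\mathcal{S}$). If the sequents $\xi;\Pi\to A$ and $\Xi(\zeta;\Gamma_1,A,\Gamma_2)\to C$ are derivable in $\mathcal{S}$, then the sequent $\Xi(\xi,\zeta;\Gamma_1,\Pi,\Gamma_2)\to C$ is also derivable in $\mathcal{S}$.
   Context: Formulae are built from a countable set of variables and the constant $\mathbf{1}$ by the binary connectives $\backslash$, $/$, $\cdot$, $\wedge$, $\vee$ and the unary connectives $\langle\rangle$, $[]^{-1}$ (bracket modalities) and $!$ (subexponential). A stoup is a finite multiset of formulae ($\varnothing$ is the empty stoup). A tree term is either a formula or an expression $[\Xi]$ with $\Xi$ a meta-formula; a meta-formula is an expression $\zeta;\Gamma$ where $\zeta$ is a stoup and $\Gamma$ is a finite linearly ordered sequence of tree terms (the empty sequence is written $\Lambda$); $\varnothing;\Gamma$ is written simply $\Gamma$. Comma denotes both concatenation of sequences and multiset union of stoups; $\zeta,A$ is $\zeta$ with one more copy of $A$. A sequent is $\Xi\to C$ with $\Xi$ a meta-formula and $C$ a formula. $\Xi(\Theta)$ denotes a meta-formula with a designated occurrence of a meta-formula $\Theta$, which is either $\Xi$ itself or the content of some bracket $[\Theta]$ occurring at any depth in $\Xi$; $\Xi(\Theta')$ is the result of replacing that occurrence by $\Theta'$.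 Below $A,B,C,D,A_1,A_2$ are formulae, $\Gamma,\Delta,\Delta_i,\Gamma_i$ sequences of tree terms, $\zeta,\zeta',\zeta_i$ stoups, $\Xi$ a meta-formula. Common axioms and rules: axioms $A\to A$ and $\Lambda\to\mathbf 1$; ($/L$) from $\zeta_1;\Gamma\to B$ and $\Xi(\zeta_2;\Delta_1,C,\Delta_2)\to D$ infer $\Xi(\zeta_1,\zeta_2;\Delta_1,C/B,\Gamma,\Delta_2)\to D$; ($/R$) from $\zeta;\Gamma,B\to C$ infer $\zeta;\Gamma\to C/B$; ($\backslash L$) from $\zeta_1;\Gamma\to A$ and $\Xi(\zeta_2;\Delta_1,C,\Delta_2)\to D$ infer $\Xi(\zeta_1,\zeta_2;\Delta_1,\Gamma,A\backslash C,\Delta_2)\to D$; ($\backslash R$) from $\zeta;A,\Gamma\to C$ infer $\zeta;\Gamma\to A\backslash C$; ($\cdot L$) from $\Xi(\zeta;\Delta_1,A,B,\Delta_2)\to D$ infer $\Xi(\zeta;\Delta_1,A\cdot B,\Delta_2)\to D$; ($\cdot R$) from $\zeta_1;\Delta\to A$ and $\zeta_2;\Gamma\to B$ infer $\zeta_1,\zeta_2;\Delta,\Gamma\to A\cdot B$; ($\mathbf1 L$) from $\Xi(\zeta;\Delta_1,\Delta_2)\to A$ infer $\Xi(\zeta;\Delta_1,\mathbf1,\Delta_2)\to A$; ($\vee L$) from $\Xi(\zeta;\Delta_1,A_1,\Delta_2)\to C$ and $\Xi(\zeta;\Delta_1,A_2,\Delta_2)\to C$ infer $\Xi(\zeta;\Delta_1,A_1\vee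 A_2,\Delta_2)\to C$; ($\vee R_i$, $i=1,2$) from $\Xi\to A_i$ infer $\Xi\to A_1\vee A_2$; ($\wedge L_i$) from $\Xi(\zeta;\Delta_1,A_i,\Delta_2)\to C$ infer $\Xi(\zeta;\Delta_1,A_1\wedge A_2,\Delta_2)\to C$; ($\wedge R$) from $\Xi\to A_1$ and $\Xi\to A_2$ infer $\Xi\to A_1\wedge A_2$; ($[]^{-1}L$) from $\Xi(\zeta;\Delta_1,A,\Delta_2)\to B$ infer $\Xi(\zeta;\Delta_1,[[]^{-1}A],\Delta_2)\to B$; ($[]^{-1}R$) from $[\Xi]\to A$ infer $\Xi\to []^{-1}A$; ($\langle\rangle L$) from $\Xi(\zeta;\Delta_1,[A],\Delta_2)\to B$ infer $\Xi(\zeta;\Delta_1,\langle\rangle A,\Delta_2)\to B$; ($\langle\rangle R$) from $\Xi\to A$ infer $[\Xi]\to\langle\rangle A$; ($!L$) from $\Xi(\zeta,A;\Gamma_1,\Gamma_2)\to B$ infer $\Xi(\zeta;\Gamma_1,!A,\Gamma_2)\to B$; ($!P$) from $\Xi(\zeta;\Gamma_1,A,\Gamma_2)\to B$ infer $\Xi(\zeta,A;\Gamma_1,\Gamma_2)\to B$. The calculus $\mathcal{M}'_{2018}$ consists of the common axioms and rules together with ($!R'$) from $A;\Lambda\to B$ infer $A;\Lambda\to !B$ (the stoup consists of exactly one formula) and ($!C'$) from $\Xi(\zeta,A;\Gamma_1,[\zeta',A;\Gamma_2],\Gamma_3)\to B$ infer $\Xi(\zeta,A;\Gamma_1,[[\zeta';\Gamma_2]],\Gamma_3)\to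 B$. The calculus $\mathcal{M}'^{-}_{2018}$ (with Lambek's non-emptiness restriction) is $\mathcal{M}'_{2018}$ restricted to formulae not containing $\mathbf1$, without the axiom $\Lambda\to\mathbf1$ and the rule $\mathbf1L$, and with the side conditions: $\backslash R$ and $/R$ may be applied only if $\Gamma\neq\Lambda$ or $\zeta\neq\varnothing$; $!C'$ may be applied only if $\Gamma_2\neq\Lambda$ or $\zeta'\neq\varnothing$. Cut is not a rule of these calculi; ''derivable'' means derivable by the listed axioms and rules. *)

(* Defs.v *)
(* Calculi M'_2018 (restricted = false) and M'^-_2018 (restricted = true). *)
From Stdlib Require Import List Permutation Bool.
Import ListNotations.
Open Scope bool_scope.

Inductive formula : Type :=
| Var   : nat -> formula
| One   : formula
| Under : formula -> formula -> formula   (* Under A C = A \ C *)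
| Over  : formula -> formula -> formula   (* Over C B  = C / B *)
| Prod  : formula -> formula -> formula
| And   : formula -> formula -> formula
| Or    : formula -> formula -> formula
| Diam  : formula -> formula
| BoxInv : formula -> formula
| Bang  : formula -> formula.

(* stoup = list of formulae, read as a multiset (see rule d_perm) *)
Definition stoup := list formula.

Inductive tterm : Type :=
| TF : formula -> tterm
| TB : meta -> tterm
with meta : Type :=
| Meta : stoup -> list tterm -> meta.

(* contexts Xi(.) : the hole is the whole meta-formula or the content of a
   bracket at any depth *)
Inductive ctx : Type :=
| Hole : ctx
| InBr : stoup -> list tterm -> ctx -> list tterm -> ctx.

Fixpoint fill (c : ctx) (M : meta) : meta :=
  match c with
  | Hole => M
  | InBr z G1 c' G2 => Meta z (G1 ++ TB (fill c' M) :: G2)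
  end.

Definition br (M : meta) : meta := Meta [] [TB M].

Inductive deriv (b : bool) : meta -> formula -> Prop :=
| d_ax : forall A, deriv b (Meta [] [TF A]) A
| d_one : b = false -> deriv b (Meta [] []) One
| d_overL : forall c z1 z2 G D1 D2 B C D,
    deriv b (Meta z1 G) B ->
    deriv b (fill c (Meta z2 (D1 ++ TF C :: D2))) D ->
    deriv b (fill c (Meta (z1 ++ z2) (D1 ++ TF (Over C B) :: G ++ D2))) D
| d_overR : forall z G B C,
    (b = true -> G <> [] \/ z <> []) ->
    deriv b (Meta z (G ++ [TF B])) C ->
    deriv b (Meta z G) (Over C B)
| d_underL : forall c z1 z2 G D1 D2 A C D,
    deriv b (Meta z1 G) A ->
    deriv b (fill c (Meta z2 (D1 ++ TF C :: D2))) D ->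
    deriv b (fill c (Meta (z1 ++ z2) (D1 ++ G ++ TF (Under A C) :: D2))) D
| d_underR : forall z G A C,
    (b = true -> G <> [] \/ z <> []) ->
    deriv b (Meta z (TF A :: G)) C ->
    deriv b (Meta z G) (Under A C)
| d_prodL : forall c z D1 D2 A B D,
    deriv b (fill c (Meta z (D1 ++ TF A :: TF B :: D2))) D ->
    deriv b (fill c (Meta z (D1 ++ TF (Prod A B) :: D2))) D
| d_prodR : forall z1 z2 D G A B,
    deriv b (Meta z1 D) A -> deriv b (Meta z2 G) B ->
    deriv b (Meta (z1 ++ z2) (D ++ G)) (Prod A B)
| d_oneL : forall c z D1 D2 A,
    b = false ->
    deriv b (fill c (Meta z (D1 ++ D2))) A ->
    deriv b (fill c (Meta z (D1 ++ TF One :: D2))) A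
| d_orL : forall c z D1 D2 A1 A2 C,
    deriv b (fill c (Meta z (D1 ++ TF A1 :: D2))) C ->
    deriv b (fill c (Meta z (D1 ++ TF A2 :: D2))) C ->
    deriv b (fill c (Meta z (D1 ++ TF (Or A1 A2) :: D2))) C
| d_orR1 : forall M A1 A2, deriv b M A1 -> deriv b M (Or A1 A2)
| d_orR2 : forall M A1 A2, deriv b M A2 -> deriv b M (Or A1 A2)
| d_andL1 : forall c z D1 D2 A1 A2 C,
    deriv b (fill c (Meta z (D1 ++ TF A1 :: D2))) C ->
    deriv b (fill c (Meta z (D1 ++ TF (And A1 A2) :: D2))) C
| d_andL2 : forall c z D1 D2 A1 A2 C,
    deriv b (fill c (Meta z (D1 ++ TF A2 :: D2))) C ->
    deriv b (fill c (Meta z (D1 ++ TF (And A1 A2) :: D2))) C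
| d_andR : forall M A1 A2,
    deriv b M A1 -> deriv b M A2 -> deriv b M (And A1 A2)
| d_boxL : forall c z D1 D2 A B,
    deriv b (fill c (Meta z (D1 ++ TF A :: D2))) B ->
    deriv b (fill c (Meta z (D1 ++ TB (Meta [] [TF (BoxInv A)]) :: D2))) B
| d_boxR : forall M A, deriv b (br M) A -> deriv b M (BoxInv A)
| d_diamL : forall c z D1 D2 A B,
    deriv b (fill c (Meta z (D1 ++ TB (Meta [] [TF A]) :: D2))) B ->
    deriv b (fill c (Meta z (D1 ++ TF (Diam A) :: D2))) B
| d_diamR : forall M A, deriv b M A -> deriv b (br M) (Diam A)
| d_bangL : forall c z G1 G2 A B,
    deriv b (fill c (Meta (z ++ [A]) (G1 ++ G2))) B ->
    deriv b (fill c (Meta z (G1 ++ TF (Bang A) :: G2))) B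
| d_bangP : forall c z G1 G2 A B,
    deriv b (fill c (Meta z (G1 ++ TF A :: G2))) B ->
    deriv b (fill c (Meta (z ++ [A]) (G1 ++ G2))) B
| d_bangR : forall A B,
    deriv b (Meta [A] []) B -> deriv b (Meta [A] []) (Bang B)
| d_bangC : forall c z z' G1 G2 G3 A B,
    (b = true -> G2 <> [] \/ z' <> []) ->
    deriv b (fill c (Meta (z ++ [A]) (G1 ++ TB (Meta (z' ++ [A]) G2) :: G3))) B ->
    deriv b (fill c (Meta (z ++ [A]) (G1 ++ TB (br (Meta z' G2)) :: G3))) B
| d_perm : forall c z z' G B,
    Permutation z z' ->
    deriv b (fill c (Meta z G)) B ->
    deriv b (fill c (Meta z' G)) B.

Fixpoint onefree (A : formula) : bool :=
  match A with
  | Var _ => true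
  | One => false
  | Under A B | Over A B | Prod A B | And A B | Or A B => onefree A && onefree B
  | Diam A | BoxInv A | Bang A => onefree A
  end.

Fixpoint tt_onefree (t : tterm) : bool :=
  match t with
  | TF A => onefree A
  | TB (Meta z G) =>
      forallb onefree z &&
      (fix go (l : list tterm) : bool :=
         match l with [] => true | t' :: l' => tt_onefree t' && go l' end) G
  end.

Definition meta_onefree (M : meta) : bool :=
  match M with Meta z G => forallb onefree z && forallb tt_onefree G end.

Definition derivable (restricted : bool) (M : meta) (C : formula) : Prop :=
  (restricted = true -> meta_onefree M = true /\ onefree C = true) /\
  deriv restricted M C.

(* Main.v *)
Require Import Defs.
From Stdlib Require Import List Permutation Bool Lia Arith.
Import ListNotations.

Definition fdec : forall x y : formula, {x = y} + {x <> y}.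
Proof. decide equality; apply Nat.eq_dec. Defined.

Ltac lnorm := repeat (progress (simpl; rewrite <- ?app_assoc; rewrite ?app_nil_r)).

Definition rep (k : nat) (xi : stoup) : stoup := concat (repeat xi k).
Lemma rep_0 xi : rep 0 xi = []. Proof. reflexivity. Qed.
Lemma rep_S k xi : rep (S k) xi = xi ++ rep k xi. Proof. reflexivity. Qed.
Lemma rep_add a b xi : rep (a + b) xi = rep a xi ++ rep b xi.
Proof. induction a; simpl; auto. unfold rep in *; simpl. rewrite IHa, app_assoc; auto. Qed.

Ltac perm_solve :=
  rewrite ?rep_add, ?rep_S, ?rep_0 in *;
  apply (Permutation_count_occ fdec); intro;
  rewrite ?count_occ_app; simpl; lia.

Lemma fill_fix b c z L z' L' C :
  deriv b (fill c (Meta z L)) C -> Permutation z z' -> L = L' ->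
  deriv b (fill c (Meta z' L')) C.
Proof. intros H P E; subst; eapply d_perm; eauto. Qed.

Lemma deriv_eq b M M' C : deriv b M C -> M = M' -> deriv b M' C.
Proof. intros; subst; auto. Qed.

Fixpoint comp (c c2 : ctx) : ctx :=
  match c with
  | Hole => c2
  | InBr z G1 c' G2 => InBr z G1 (comp c' c2) G2
  end.

Lemma fill_comp c c2 M : fill (comp c c2) M = fill c (fill c2 M).
Proof. induction c; simpl; congruence. Qed.

Definition plug (Xi : ctx) (zeta : stoup) (G1 G2 : list tterm) (M : meta) : meta :=
  match M with Meta xi Pi => fill Xi (Meta (xi ++ zeta) (G1 ++ Pi ++ G2)) end.

Lemma plug_fill Xi zeta G1 G2 c : exists c' s P1 P2, forall z L,
  plug Xi zeta G1 G2 (fill c (Meta z L)) = fill c' (Meta (z ++ s) (P1 ++ L ++ P2)).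
Proof.
  destruct c as [|z0 L1 c1 L2].
  - exists Xi, zeta, G1, G2; reflexivity.
  - exists (comp Xi (InBr (z0 ++ zeta) (G1 ++ L1) c1 (L2 ++ G2))), [], [], [].
    intros z L; simpl. rewrite fill_comp; simpl. rewrite !app_nil_r. f_equal; f_equal.
    lnorm. reflexivity.
Qed.


Inductive rlast (b : bool) : meta -> formula -> Prop :=
| rl_ax A : rlast b (Meta [] [TF A]) A
| rl_one : b = false -> rlast b (Meta [] []) One
| rl_overR z G B C : (b = true -> G <> [] \/ z <> []) ->
    deriv b (Meta z (G ++ [TF B])) C -> rlast b (Meta z G) (Over C B)
| rl_underR z G A C : (b = true -> G <> [] \/ z <> []) ->
    deriv b (Meta z (TF A :: G)) C -> rlast b (Meta z G) (Under A C)
| rl_prodR z1 z2 D G A B : deriv b (Meta z1 D) A -> deriv b (Meta z2 G) B ->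
    rlast b (Meta (z1 ++ z2) (D ++ G)) (Prod A B)
| rl_orR1 M A1 A2 : deriv b M A1 -> rlast b M (Or A1 A2)
| rl_orR2 M A1 A2 : deriv b M A2 -> rlast b M (Or A1 A2)
| rl_andR M A1 A2 : deriv b M A1 -> deriv b M A2 -> rlast b M (And A1 A2)
| rl_boxR M A : deriv b (br M) A -> rlast b M (BoxInv A)
| rl_diamR M A : deriv b M A -> rlast b (br M) (Diam A)
| rl_bangR A B : deriv b (Meta [A] []) B -> rlast b (Meta [A] []) (Bang B).

Definition Pq b (Q : ctx -> stoup -> list tterm -> list tterm -> formula -> Prop) M :=
  forall Xi zeta G1 G2 C, Q Xi zeta G1 G2 C -> deriv b (plug Xi zeta G1 G2 M) C.

Ltac fin := first [ apply Permutation_refl | perm_solve | (lnorm; reflexivity) ].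

Ltac prep Xi zeta G1 G2 C0 HQ E :=
  repeat match goal with
  | IH : ?x = ?x -> _ |- _ => specialize (IH eq_refl)
  | IH : (forall M, rlast ?b M ?A -> _) -> _, H : forall M, rlast ?b M ?A -> _ |- _ =>
      specialize (IH H)
  | IH : forall (_:ctx) (_:stoup) (_ : list tterm) (_ : list tterm) (_ : formula), _ |- _ =>
      specialize (IH Xi zeta G1 G2 C0 HQ); rewrite E in IH
  end.

Ltac lcstart :=
  let c' := fresh "c'" in let s := fresh "s" in let P1 := fresh "P1" in
  let P2 := fresh "P2" in let E := fresh "E" in
  intros KXi Kz KG1 KG2 KC HQ;
  match goal with |- deriv _ (plug _ _ _ _ (fill ?c _)) _ =>
    destruct (plug_fill KXi Kz KG1 KG2 c) as (c' & s & P1 & P2 & E) end;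
  rewrite E; prep KXi Kz KG1 KG2 KC HQ E.

Ltac lc1 rl := eapply fill_fix; [eapply rl;
  eapply fill_fix; [eassumption | fin | fin] | fin | fin].

Lemma left_comm b A Q (Hr : forall M, rlast b M A -> Pq b Q M) :
  forall M, deriv b M A -> Pq b Q M.
Proof.
  intros M HM. remember A as A0 eqn:EA. induction HM; subst;
    try (apply Hr; econstructor; eauto; fail); unfold Pq in *; lcstart.
  -
    eapply fill_fix; [eapply (d_overL _ c' z1 (z2 ++ s) G (P1 ++ D1) (D2 ++ P2));
      [eassumption | eapply fill_fix; [eassumption | fin | fin]] | fin | fin].
  - eapply fill_fix; [eapply (d_underL _ c' z1 (z2 ++ s) G (P1 ++ D1) (D2 ++ P2));
      [eassumption | eapply fill_fix; [eassumption | fin | fin]] | fin | fin].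
  - lc1 (d_prodL b c' (z ++ s) (P1 ++ D1) (D2 ++ P2)).
  - eapply fill_fix; [eapply (d_oneL _ c' (z ++ s) (P1 ++ D1) (D2 ++ P2));
      [reflexivity | eapply fill_fix; [eassumption | fin | fin]] | fin | fin].
  - eapply fill_fix; [eapply (d_orL _ c' (z ++ s) (P1 ++ D1) (D2 ++ P2)) | fin | fin].
    + eapply fill_fix; [exact IHHM1 | fin | fin].
    + eapply fill_fix; [exact IHHM2 | fin | fin].
  - lc1 (d_andL1 b c' (z ++ s) (P1 ++ D1) (D2 ++ P2)).
  - lc1 (d_andL2 b c' (z ++ s) (P1 ++ D1) (D2 ++ P2)).
  - lc1 (d_boxL b c' (z ++ s) (P1 ++ D1) (D2 ++ P2)).
  - lc1 (d_diamL b c' (z ++ s) (P1 ++ D1) (D2 ++ P2)).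
  - lc1 (d_bangL b c' (z ++ s) (P1 ++ G1) (G2 ++ P2) A0).
  - lc1 (d_bangP b c' (z ++ s) (P1 ++ G1) (G2 ++ P2) A0).
  - eapply fill_fix; [eapply (d_bangC _ c' (z ++ s) z' (P1 ++ G1) G2 (G3 ++ P2) A0);
      [assumption | eapply fill_fix; [eassumption | fin | fin]] | fin | fin].
  - eapply fill_fix; [eassumption | | fin].
    apply Permutation_app_tail; assumption.
Qed.


Definition SRel (B D : formula) (x y : formula) : Prop := y = x \/ (x = B /\ y = D).

Inductive RM (A : formula) (xi : stoup) (Pi : list tterm) (B D : formula) : meta -> meta -> Prop :=
| RM_i : forall z z' L L' k, Forall2 (SRel B D) z z' -> RL A xi Pi B D L L' k ->
    RM A xi Pi B D (Meta z L) (Meta (z' ++ rep k xi) L')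
with RL (A : formula) (xi : stoup) (Pi : list tterm) (B D : formula) :
  list tterm -> list tterm -> nat -> Prop :=
| RL_nil : RL A xi Pi B D [] [] 0
| RL_F : forall X L L' k, RL A xi Pi B D L L' k -> RL A xi Pi B D (TF X :: L) (TF X :: L') k
| RL_A : forall L L' k, RL A xi Pi B D L L' k -> RL A xi Pi B D (TF A :: L) (Pi ++ L') (S k)
| RL_B : forall M M' L L' k, RM A xi Pi B D M M' -> RL A xi Pi B D L L' k ->
    RL A xi Pi B D (TB M :: L) (TB M' :: L') k.


Lemma SR_refl B D z : Forall2 (SRel B D) z z.
Proof. induction z; constructor; auto. left; auto. Qed.

Fixpoint RM_refl A xi Pi B D (M : meta) {struct M} : RM A xi Pi B D M M :=
  match M with
  | Meta z L =>
    eq_rect _ (fun z0 => RM A xi Pi B D (Meta z L) (Meta z0 L))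
      (RM_i A xi Pi B D z z L L 0 (SR_refl B D z)
        ((fix go (L : list tterm) : RL A xi Pi B D L L 0 :=
           match L with
           | [] => RL_nil A xi Pi B D
           | TF X :: L' => RL_F A xi Pi B D X L' L' 0 (go L')
           | TB M' :: L' => RL_B A xi Pi B D M' M' L' L' 0 (RM_refl A xi Pi B D M') (go L')
           end) L)) z (app_nil_r z)
  end.

Lemma RL_refl A xi Pi B D L : RL A xi Pi B D L L 0.
Proof. induction L as [|[X|M] L IH]; constructor; auto using RM_refl. Qed.

Lemma RL_app A xi Pi B D L1 L1' k1 L2 L2' k2 :
  RL A xi Pi B D L1 L1' k1 -> RL A xi Pi B D L2 L2' k2 ->
  RL A xi Pi B D (L1 ++ L2) (L1' ++ L2') (k1 + k2).
Proof.
  intros H1 H2; induction H1; simpl; auto.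
  - constructor; auto.
  - rewrite <- app_assoc. constructor; auto.
  - constructor; auto.
Qed.

Lemma RL_nil_inv A xi Pi B D L' k : RL A xi Pi B D [] L' k -> L' = [] /\ k = 0.
Proof. intro H; inversion H; auto. Qed.

Lemma RL_F_inv A xi Pi B D X L L' k : RL A xi Pi B D (TF X :: L) L' k ->
  (exists L'', L' = TF X :: L'' /\ RL A xi Pi B D L L'' k) \/
  (X = A /\ exists L'' k', L' = Pi ++ L'' /\ RL A xi Pi B D L L'' k' /\ k = S k').
Proof. intro H; inversion H; subst; eauto 10. Qed.

Lemma RL_B_inv A xi Pi B D M L L' k : RL A xi Pi B D (TB M :: L) L' k ->
  exists M' L'', L' = TB M' :: L'' /\ RM A xi Pi B D M M' /\ RL A xi Pi B D L L'' k.
Proof. intro H; inversion H; subst; eauto 10. Qed.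

Lemma RL_app_inv A xi Pi B D L1 L2 L' k : RL A xi Pi B D (L1 ++ L2) L' k ->
  exists L1' L2' k1 k2, L' = L1' ++ L2' /\ RL A xi Pi B D L1 L1' k1 /\
     RL A xi Pi B D L2 L2' k2 /\ k = k1 + k2.
Proof.
  revert L' k; induction L1 as [|[X|M] L1 IH]; intros L' k H; simpl in H.
  - exists [], L', 0, k; repeat split; auto; constructor.
  - apply RL_F_inv in H as [(L'' & -> & H)|(-> & L'' & k' & -> & H & ->)].
    + destruct (IH _ _ H) as (a & b & k1 & k2 & -> & H1 & H2 & ->).
      exists (TF X :: a), b, k1, k2; repeat split; auto; constructor; auto.
    + destruct (IH _ _ H) as (a & b & k1 & k2 & -> & H1 & H2 & ->).
      exists (Pi ++ a), b, (S k1), k2; repeat split; auto.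
      * rewrite app_assoc; auto.
      * constructor; auto.
  - apply RL_B_inv in H as (M' & L'' & -> & HM & H).
    destruct (IH _ _ H) as (a & b & k1 & k2 & -> & H1 & H2 & ->).
    exists (TB M' :: a), b, k1, k2; repeat split; auto; constructor; auto.
Qed.

Lemma RM_inv A xi Pi B D z L N : RM A xi Pi B D (Meta z L) N ->
  exists z' L' k, N = Meta (z' ++ rep k xi) L' /\ Forall2 (SRel B D) z z' /\ RL A xi Pi B D L L' k.
Proof. intro H; inversion H; subst. do 3 eexists; split; [reflexivity|auto]. Qed.

Definition RC A xi Pi B D c c' :=
  forall X X', RM A xi Pi B D X X' -> RM A xi Pi B D (fill c X) (fill c' X').

Lemma RC_refl A xi Pi B D c : RC A xi Pi B D c c.
Proof.
  unfold RC; induction c; intros Y Y' H; simpl; auto.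
  rewrite <- (app_nil_r s) at 2. change [] with (rep (0 + 0) xi).
  constructor. apply SR_refl. apply RL_app. apply RL_refl. constructor; auto. apply RL_refl.
Qed.

Lemma RM_fill_inv A xi Pi B D c M N : RM A xi Pi B D (fill c M) N ->
  exists c' M', N = fill c' M' /\ RM A xi Pi B D M M' /\ RC A xi Pi B D c c'.
Proof.
  unfold RC; revert N; induction c as [|z L1 c IH L2]; intros N H; simpl in H.
  - exists Hole, N; repeat split; auto.
  - apply RM_inv in H as (z' & L' & k & -> & HS & HL).
    apply RL_app_inv in HL as (a & b' & k1 & k2 & -> & H1 & H2 & ->).
    apply RL_B_inv in H2 as (M1 & L'' & -> & HM & H2).
    destruct (IH _ HM) as (c' & M' & -> & HM' & HC).
    exists (InBr (z' ++ rep (k1 + k2) xi) a c' L''), M'; repeat split; auto.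
    apply RL_app; auto. constructor; auto.
Qed.


Inductive LP (b : bool) : formula -> ctx -> stoup -> list tterm -> list tterm -> formula -> Prop :=
| lp_ax A : LP b A Hole [] [] [] A
| lp_over c z1 z2 G D1 D2 B C D : deriv b (Meta z1 G) B ->
    deriv b (fill c (Meta z2 (D1 ++ TF C :: D2))) D -> LP b (Over C B) c (z1 ++ z2) D1 (G ++ D2) D
| lp_under c z1 z2 G D1 D2 A C D : deriv b (Meta z1 G) A ->
    deriv b (fill c (Meta z2 (D1 ++ TF C :: D2))) D -> LP b (Under A C) c (z1 ++ z2) (D1 ++ G) D2 D
| lp_prod c z D1 D2 A B D : deriv b (fill c (Meta z (D1 ++ TF A :: TF B :: D2))) D ->
    LP b (Prod A B) c z D1 D2 D
| lp_one c z D1 D2 A : b = false -> deriv b (fill c (Meta z (D1 ++ D2))) A -> LP b One c z D1 D2 A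
| lp_or c z D1 D2 A1 A2 C : deriv b (fill c (Meta z (D1 ++ TF A1 :: D2))) C ->
    deriv b (fill c (Meta z (D1 ++ TF A2 :: D2))) C -> LP b (Or A1 A2) c z D1 D2 C
| lp_and1 c z D1 D2 A1 A2 C : deriv b (fill c (Meta z (D1 ++ TF A1 :: D2))) C ->
    LP b (And A1 A2) c z D1 D2 C
| lp_and2 c z D1 D2 A1 A2 C : deriv b (fill c (Meta z (D1 ++ TF A2 :: D2))) C ->
    LP b (And A1 A2) c z D1 D2 C
| lp_box c z D1 D2 A B : deriv b (fill c (Meta z (D1 ++ TF A :: D2))) B ->
    LP b (BoxInv A) (comp c (InBr z D1 Hole D2)) [] [] [] B
| lp_diam c z D1 D2 A B : deriv b (fill c (Meta z (D1 ++ TB (Meta [] [TF A]) :: D2))) B ->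
    LP b (Diam A) c z D1 D2 B
| lp_bang c z G1 G2 A B : deriv b (fill c (Meta (z ++ [A]) (G1 ++ G2))) B ->
    LP b (Bang A) c z G1 G2 B.

Definition PLfor b A xi Pi := forall Xi zeta G1 G2 C, LP b A Xi zeta G1 G2 C ->
  deriv b (fill Xi (Meta (xi ++ zeta) (G1 ++ Pi ++ G2))) C.

Definition HPf b B D := forall c z G1 G2 C, deriv b (fill c (Meta z (G1 ++ TF B :: G2))) C ->
  deriv b (fill c (Meta (z ++ [D]) (G1 ++ G2))) C.


Arguments RM_i {A xi Pi B D z z' L L' k}.
Arguments RL_nil {A xi Pi B D}.
Arguments RL_F {A xi Pi B D X L L' k}.
Arguments RL_A {A xi Pi B D L L' k}.
Arguments RL_B {A xi Pi B D M M' L L' k}.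
Arguments RL_app {A xi Pi B D L1 L1' k1 L2 L2' k2}.

Lemma rep_1 xi : rep 1 xi = xi. Proof. unfold rep; simpl; apply app_nil_r. Qed.

Ltac repn := repeat (first [rewrite rep_add | rewrite rep_S | rewrite rep_0 in *]).
Ltac psolve := repn; apply (Permutation_count_occ fdec); intro;
  rewrite ?count_occ_app; simpl; rewrite ?count_occ_app;
  repeat (match goal with |- context [if fdec ?a ?x then _ else _] => destruct (fdec a x) end); lia.
Ltac leq := rewrite ?rep_0, ?rep_1; lnorm; reflexivity.

Lemma ne_pres A xi Pi B D L L' k z z' : RL A xi Pi B D L L' k -> Forall2 (SRel B D) z z' ->
  (xi <> [] \/ Pi <> []) -> (L <> [] \/ z <> []) -> (L' <> [] \/ z' ++ rep k xi <> []).
Proof.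
  intros HL HS Hx [HLn|Hz].
  - destruct L as [|[X|M] L]; [congruence| |].
    + apply RL_F_inv in HL as [(L'' & -> & _)|(_ & L'' & k' & -> & _ & ->)].
      * left; discriminate.
      * destruct Hx as [Hx|Hx].
        -- right. rewrite rep_S. intro E. apply app_eq_nil in E as [_ E].
           apply app_eq_nil in E as [E _]. auto.
        -- left. intro E. apply app_eq_nil in E as [E _]. auto.
    + apply RL_B_inv in HL as (M' & L'' & -> & _). left; discriminate.
  - right. intro E. apply app_eq_nil in E as [E _]. subst. inversion HS. subst. auto.
Qed.

Lemma fill_perm_inner b c z L1 z1 L L2 z1' C :
  deriv b (fill c (Meta z (L1 ++ TB (Meta z1 L) :: L2))) C -> Permutation z1 z1' ->
  deriv b (fill c (Meta z (L1 ++ TB (Meta z1' L) :: L2))) C.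
Proof.
  intros H P. assert (E : forall w, fill c (Meta z (L1 ++ TB (Meta w L) :: L2)) =
    fill (comp c (InBr z L1 Hole L2)) (Meta w L)).
  { intro; rewrite fill_comp; reflexivity. }
  rewrite E in *. eapply d_perm; eauto.
Qed.

Lemma SR1 B D A : Forall2 (SRel B D) [A] [A].
Proof. constructor; [left; auto | constructor]. Qed.

Ltac invR HR := apply RM_fill_inv in HR as (cc & MM & -> & HM & HC);
  apply RM_inv in HM as (zz & LL & kk & -> & HS & HL).
Ltac appL H a r ka kr Ha Hr := apply RL_app_inv in H as (a & r & ka & kr & -> & Ha & Hr & ->).

Lemma multi b Ac xi Pi Bs Ds (HPL : PLfor b Ac xi Pi) (HP : HPf b Bs Ds)
  (Hne : b = true -> xi <> [] \/ Pi <> []) :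
  forall M C, deriv b M C -> forall N, RM Ac xi Pi Bs Ds M N -> deriv b N C.
Proof.
  induction 1; intros N HR.
  -
    apply RM_inv in HR as (zz & LL & kk & -> & HS & HL). inversion HS; subst.
    apply RL_F_inv in HL as [(L'' & -> & HL)|(-> & L'' & k' & -> & HL & ->)];
      apply RL_nil_inv in HL as [-> ->].
    + simpl; apply d_ax.
    + eapply deriv_eq; [apply (HPL Hole [] [] [] Ac (lp_ax b Ac)) | simpl; leq].
  -
    apply RM_inv in HR as (zz & LL & kk & -> & HS & HL). inversion HS; subst.
    apply RL_nil_inv in HL as [-> ->]. simpl; apply d_one; auto.
  -
    invR HR. apply Forall2_app_inv_l in HS as (w1 & w2 & HS1 & HS2 & ->).
    appL HL a r ka kr Ha Hr.
    apply RL_F_inv in Hr as [(r' & -> & Hr)|(Heq & r' & k' & -> & Hr & ->)];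
      appL Hr g d kg kd Hg Hd;
      pose proof (IHderiv1 _ (RM_i HS1 Hg)) as IH1;
      pose proof (IHderiv2 _ (HC _ _ (RM_i HS2 (RL_app Ha (RL_F Hd))))) as IH2.
    + eapply fill_fix; [apply (d_overL b cc _ _ _ _ _ _ _ _ IH1 IH2) | psolve | leq].
    + subst Ac. eapply fill_fix; [apply (HPL _ _ _ _ _ (lp_over b cc _ _ _ _ _ _ _ _ IH1 IH2)) | psolve | leq].
  -
    apply RM_inv in HR as (zz & LL & kk & -> & HS & HL).
    pose proof (IHderiv _ (RM_i HS (RL_app HL (RL_F (X := B) RL_nil)))) as IH.
    rewrite Nat.add_0_r in IH.
    apply d_overR; auto. intro Hb; eapply ne_pres; eauto.
  -
    invR HR. apply Forall2_app_inv_l in HS as (w1 & w2 & HS1 & HS2 & ->).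
    appL HL a r ka kr Ha Hr. appL Hr g r2 kg kr2 Hg Hr2.
    apply RL_F_inv in Hr2 as [(r' & -> & Hr)|(Heq & r' & k' & -> & Hr & ->)];
      pose proof (IHderiv1 _ (RM_i HS1 Hg)) as IH1;
      pose proof (IHderiv2 _ (HC _ _ (RM_i HS2 (RL_app Ha (RL_F Hr))))) as IH2.
    + eapply fill_fix; [apply (d_underL b cc _ _ _ _ _ _ _ _ IH1 IH2) | psolve | leq].
    + subst Ac. eapply fill_fix; [apply (HPL _ _ _ _ _ (lp_under b cc _ _ _ _ _ _ _ _ IH1 IH2)) | psolve | leq].
  -
    apply RM_inv in HR as (zz & LL & kk & -> & HS & HL).
    pose proof (IHderiv _ (RM_i HS (RL_F (X := A) HL))) as IH.
    apply d_underR; auto. intro Hb; eapply ne_pres; eauto.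
  -
    invR HR. appL HL a r ka kr Ha Hr.
    apply RL_F_inv in Hr as [(r' & -> & Hr)|(Heq & r' & k' & -> & Hr & ->)];
      pose proof (IHderiv _ (HC _ _ (RM_i HS (RL_app Ha (RL_F (X := A) (RL_F (X := B) Hr)))))) as IH.
    + eapply fill_fix; [apply (d_prodL b cc _ _ _ _ _ _ IH) | psolve | leq].
    + subst Ac. eapply fill_fix; [apply (HPL _ _ _ _ _ (lp_prod b cc _ _ _ _ _ _ IH)) | psolve | leq].
  -
    apply RM_inv in HR as (zz & LL & kk & -> & HS & HL).
    apply Forall2_app_inv_l in HS as (w1 & w2 & HS1 & HS2 & ->).
    appL HL a r ka kr Ha Hr.
    pose proof (IHderiv1 _ (RM_i HS1 Ha)) as IH1.
    pose proof (IHderiv2 _ (RM_i HS2 Hr)) as IH2.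
    eapply (fill_fix b Hole); [apply (d_prodR _ _ _ _ _ _ _ IH1 IH2) | psolve | leq].
  -
    invR HR. appL HL a r ka kr Ha Hr.
    apply RL_F_inv in Hr as [(r' & -> & Hr)|(Heq & r' & k' & -> & Hr & ->)];
      pose proof (IHderiv _ (HC _ _ (RM_i HS (RL_app Ha Hr)))) as IH.
    + eapply fill_fix; [apply (d_oneL b cc _ _ _ _ H IH) | psolve | leq].
    + subst Ac. eapply fill_fix; [apply (HPL _ _ _ _ _ (lp_one b cc _ _ _ _ H IH)) | psolve | leq].
  -
    invR HR. appL HL a r ka kr Ha Hr.
    apply RL_F_inv in Hr as [(r' & -> & Hr)|(Heq & r' & k' & -> & Hr & ->)];
      pose proof (IHderiv1 _ (HC _ _ (RM_i HS (RL_app Ha (RL_F (X := A1) Hr))))) as IH1;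
      pose proof (IHderiv2 _ (HC _ _ (RM_i HS (RL_app Ha (RL_F (X := A2) Hr))))) as IH2.
    + eapply fill_fix; [apply (d_orL b cc _ _ _ _ _ _ IH1 IH2) | psolve | leq].
    + subst Ac. eapply fill_fix; [apply (HPL _ _ _ _ _ (lp_or b cc _ _ _ _ _ _ IH1 IH2)) | psolve | leq].
  - apply d_orR1; auto.
  - apply d_orR2; auto.
  -
    invR HR. appL HL a r ka kr Ha Hr.
    apply RL_F_inv in Hr as [(r' & -> & Hr)|(Heq & r' & k' & -> & Hr & ->)];
      pose proof (IHderiv _ (HC _ _ (RM_i HS (RL_app Ha (RL_F (X := A1) Hr))))) as IH.
    + eapply fill_fix; [apply (d_andL1 b cc _ _ _ _ A2 _ IH) | psolve | leq].
    + subst Ac. eapply fill_fix; [apply (HPL _ _ _ _ _ (lp_and1 b cc _ _ _ _ A2 _ IH)) | psolve | leq].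
  -
    invR HR. appL HL a r ka kr Ha Hr.
    apply RL_F_inv in Hr as [(r' & -> & Hr)|(Heq & r' & k' & -> & Hr & ->)];
      pose proof (IHderiv _ (HC _ _ (RM_i HS (RL_app Ha (RL_F (X := A2) Hr))))) as IH.
    + eapply fill_fix; [apply (d_andL2 b cc _ _ _ A1 _ _ IH) | psolve | leq].
    + subst Ac. eapply fill_fix; [apply (HPL _ _ _ _ _ (lp_and2 b cc _ _ _ A1 _ _ IH)) | psolve | leq].
  - apply d_andR; auto.
  -
    invR HR. appL HL a r ka kr Ha Hr.
    apply RL_B_inv in Hr as (M1 & d & -> & HM1 & Hd).
    apply RM_inv in HM1 as (s1 & LB & j & -> & HS1 & HLB). inversion HS1; subst.
    pose proof (IHderiv _ (HC _ _ (RM_i HS (RL_app Ha (RL_F (X := A) Hd))))) as IH.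
    apply RL_F_inv in HLB as [(r' & -> & Hr)|(Heq & r' & k' & -> & Hr & ->)];
      apply RL_nil_inv in Hr as [-> ->].
    + eapply fill_fix; [apply (d_boxL b cc _ _ _ _ _ IH) | psolve | leq].
    + subst Ac. pose proof (HPL _ _ _ _ _ (lp_box b cc _ _ _ _ _ IH)) as H2.
      rewrite fill_comp in H2. eapply fill_fix; [exact H2 | psolve | leq].
  -
    apply d_boxR. apply IHderiv. exact (RM_i (Forall2_nil _) (RL_B HR RL_nil)).
  -
    invR HR. appL HL a r ka kr Ha Hr.
    apply RL_F_inv in Hr as [(r' & -> & Hr)|(Heq & r' & k' & -> & Hr & ->)];
      pose proof (IHderiv _ (HC _ _ (RM_i HS (RL_app Ha
         (RL_B (RM_refl Ac xi Pi Bs Ds (Meta [] [TF A])) Hr))))) as IH.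
    + eapply fill_fix; [apply (d_diamL b cc _ _ _ _ _ IH) | psolve | leq].
    + subst Ac. eapply fill_fix; [apply (HPL _ _ _ _ _ (lp_diam b cc _ _ _ _ _ IH)) | psolve | leq].
  -
    unfold br in HR.
    apply RM_inv in HR as (zz & LL & kk & -> & HS & HL). inversion HS; subst.
    apply RL_B_inv in HL as (M1 & d & -> & HM1 & Hd). apply RL_nil_inv in Hd as [-> ->].
    apply (d_diamR b M1 A); auto.
  -
    invR HR. appL HL a r ka kr Ha Hr.
    apply RL_F_inv in Hr as [(r' & -> & Hr)|(Heq & r' & k' & -> & Hr & ->)];
    pose proof (IHderiv _ (HC _ _ (RM_i (Forall2_app HS (SR1 Bs Ds A)) (RL_app Ha Hr)))) as IH.
    + eapply fill_fix; [apply (d_bangL b cc (zz ++ rep (ka + kr) xi) a r' A B);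
        eapply fill_fix; [exact IH | psolve | leq] | psolve | leq].
    + subst Ac. eapply fill_fix; [apply HPL; apply (lp_bang b cc (zz ++ rep (ka + k') xi) a r' A B);
        eapply fill_fix; [exact IH | psolve | leq] | psolve | leq].
  -
    invR HR. apply Forall2_app_inv_l in HS as (w1 & w2 & HS1 & HS2 & ->).
    inversion HS2 as [|x y l l' Hy Hn]; subst. inversion Hn; subst.
    appL HL a r ka kr Ha Hr.
    pose proof (IHderiv _ (HC _ _ (RM_i HS1 (RL_app Ha (RL_F (X := A) Hr))))) as IH.
    destruct Hy as [->|[-> ->]].
    + eapply fill_fix; [apply (d_bangP b cc _ a r A B IH) | psolve | leq].
    + eapply fill_fix; [apply (HP cc _ a r B IH) | psolve | leq].
  -
    pose proof (IHderiv _ HR) as IH.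
    apply RM_inv in HR as (zz & LL & kk & -> & HS & HL).
    apply RL_nil_inv in HL as [-> ->]. inversion HS as [|x y l l' Hy Hn]; subst.
    inversion Hn; subst. simpl in *. apply d_bangR; auto.
  -
    invR HR. apply Forall2_app_inv_l in HS as (w1 & w2 & HS1 & HS2 & ->).
    inversion HS2 as [|x y l l' Hy Hn]; subst. inversion Hn; subst.
    appL HL a r ka kr Ha Hr.
    apply RL_B_inv in Hr as (M1 & d & -> & HM1 & Hd).
    unfold br in HM1. apply RM_inv in HM1 as (s1 & LB & j & -> & HS3 & HLB). inversion HS3; subst.
    apply RL_B_inv in HLB as (M2 & LB' & -> & HM2 & HLB). apply RL_nil_inv in HLB as [-> ->].
    apply RM_inv in HM2 as (v & g2 & m & -> & HSv & Hg2).
    assert (HSy : Forall2 (SRel Bs Ds) [A] [y]) by (constructor; auto).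
    pose proof (IHderiv _ (HC _ _ (RM_i (Forall2_app HS1 HSy)
        (RL_app Ha (RL_B (RM_i (Forall2_app HSv HSy) Hg2) Hd))))) as IH.
    eapply fill_fix; [apply (d_bangC b cc (w1 ++ rep (ka + kr) xi) (v ++ rep m xi) a g2 d y B) | psolve | leq].
    + intro Hb. eapply ne_pres; eauto.
    + eapply fill_perm_inner with (z1 := (v ++ [y]) ++ rep m xi); [ | psolve]. eapply fill_fix; [exact IH | psolve | leq].
  -
    invR HR.
    edestruct Permutation_Forall2 as (zz0 & P0 & HS0); [apply (Permutation_sym H) | apply HS |].
    pose proof (IHderiv _ (HC _ _ (RM_i HS0 HL))) as IH.
    eapply fill_fix; [exact IH | | reflexivity].
    apply Permutation_app_tail. apply Permutation_sym; auto.
Qed.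


Definition Cut1 b A := forall xi Pi Xi zeta G1 G2 C, deriv b (Meta xi Pi) A ->
  deriv b (fill Xi (Meta zeta (G1 ++ TF A :: G2))) C ->
  deriv b (fill Xi (Meta (xi ++ zeta) (G1 ++ Pi ++ G2))) C.

Lemma LP_sound b A Xi zeta G1 G2 C : LP b A Xi zeta G1 G2 C ->
  deriv b (fill Xi (Meta zeta (G1 ++ TF A :: G2))) C.
Proof.
  intro H; destruct H; simpl.
  - apply d_ax.
  - apply d_overL; auto.
  - rewrite <- app_assoc. apply d_underL; auto.
  - apply d_prodL; auto.
  - apply d_oneL; auto.
  - apply d_orL; auto.
  - apply d_andL1; auto.
  - apply d_andL2; auto.
  - rewrite fill_comp; simpl. apply d_boxL; auto.
  - apply d_diamL; auto.
  - apply d_bangL; auto.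
Qed.

Lemma PL_from_cut b A xi Pi : Cut1 b A -> deriv b (Meta xi Pi) A -> PLfor b A xi Pi.
Proof. intros HC Hd Xi zeta G1 G2 C HL. apply HC; auto. apply LP_sound; auto. Qed.

Lemma cut_from_multi b A xi Pi (HPL : PLfor b A xi Pi) (Hne : b = true -> xi <> [] \/ Pi <> []) :
  forall Xi zeta G1 G2 C, deriv b (fill Xi (Meta zeta (G1 ++ TF A :: G2))) C ->
  deriv b (fill Xi (Meta (xi ++ zeta) (G1 ++ Pi ++ G2))) C.
Proof.
  intros Xi zeta G1 G2 C H.
  assert (HP : HPf b A A) by (intros c z L1 L2 C' H'; apply d_bangP; auto).
  pose proof (multi b A xi Pi A A HPL HP Hne _ _ H
    (fill Xi (Meta (zeta ++ rep (0 + 1) xi) (G1 ++ Pi ++ G2)))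
    (RC_refl A xi Pi A A Xi _ _ (RM_i (SR_refl A A zeta)
       (RL_app (RL_refl A xi Pi A A G1) (RL_A (RL_refl A xi Pi A A G2)))))) as H'.
  eapply fill_fix; [exact H' | psolve | reflexivity].
Qed.

Definition subf (X A : formula) : Prop :=
  match A with
  | Under a c | Over a c | Prod a c | And a c | Or a c => X = a \/ X = c
  | Diam a | BoxInv a | Bang a => X = a
  | _ => False
  end.

Lemma rlast_sound b M A : rlast b M A -> deriv b M A.
Proof. intro H; destruct H; first [apply d_orR2; assumption | econstructor; eauto]. Qed.

Lemma ax_case b M A : deriv b M A -> deriv b (plug Hole [] [] [] M) A.
Proof. destruct M; simpl; rewrite !app_nil_r; auto. Qed.

Lemma PL_lemma b A (IH : forall X, subf X A -> Cut1 b X) :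
  forall xi Pi, deriv b (Meta xi Pi) A -> PLfor b A xi Pi.
Proof.
  intros xi Pi Hd.
  refine (left_comm b A (LP b A) _ (Meta xi Pi) Hd).
  clear xi Pi Hd.
  intros M HM Xi zeta G1 G2 C HL.
  pose proof (rlast_sound _ _ _ HM) as HMd.
  destruct HM.
  1: eapply deriv_eq; [apply (LP_sound _ _ _ _ _ _ _ HL) | simpl; reflexivity].
  all: try (destruct M as [xm pm]); inversion HL; subst; try (apply ax_case; assumption); simpl.
  - assumption.
  - pose proof (IH B (or_intror eq_refl) z1 G0 Hole z G [] C0 H3 H0) as h1.
    pose proof (IH C0 (or_introl eq_refl) _ _ Xi z2 G1 D2 C h1 H9) as h2.
    eapply fill_fix; [exact h2 | psolve | leq].
  - pose proof (IH A (or_introl eq_refl) z1 G0 Hole z [] G C0 H3 H0) as h1.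
    pose proof (IH C0 (or_intror eq_refl) _ _ Xi z2 D1 G2 C h1 H9) as h2.
    eapply fill_fix; [exact h2 | psolve | leq].
  - pose proof (IH A (or_introl eq_refl) z1 D Xi zeta G1 (TF B :: G2) C H H8) as h1.
    assert (h1' : deriv b (fill Xi (Meta (z1 ++ zeta) ((G1 ++ D) ++ TF B :: G2))) C)
      by (eapply fill_fix; [exact h1 | psolve | leq]).
    pose proof (IH B (or_intror eq_refl) z2 G Xi _ _ G2 C H0 h1') as h2.
    eapply fill_fix; [exact h2 | psolve | leq].
  - exact (IH A1 (or_introl eq_refl) xm pm Xi zeta G1 G2 C H H2).
  - exact (IH A2 (or_intror eq_refl) xm pm Xi zeta G1 G2 C H H8).
  - exact (IH A1 (or_introl eq_refl) xm pm Xi zeta G1 G2 C H H8).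
  - exact (IH A2 (or_intror eq_refl) xm pm Xi zeta G1 G2 C H0 H8).
  - pose proof (IH A eq_refl [] [TB (Meta xm pm)] c z D1 D2 C H H1) as h1.
    rewrite fill_comp. eapply fill_fix; [exact h1 | psolve | leq].
  - assert (H1' : deriv b (fill (comp Xi (InBr zeta G1 Hole G2)) (Meta [] ([] ++ TF A :: []))) C)
      by (rewrite fill_comp; exact H1).
    pose proof (IH A eq_refl xm pm _ [] [] [] C H H1') as h1.
    rewrite fill_comp in h1. eapply fill_fix; [exact h1 | psolve | leq].
  - assert (HPL' : PLfor b B [A] []) by (apply PL_from_cut; auto; apply IH; reflexivity).
    assert (HP' : HPf b B A).
    { intros c' z' L1 L2 C' H'. pose proof (IH B eq_refl _ _ c' z' L1 L2 C' H H') as h.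
      eapply fill_fix; [exact h | psolve | leq]. }
    assert (Hs : Forall2 (SRel B A) (zeta ++ [B]) (zeta ++ [A])).
    { apply Forall2_app; [apply SR_refl | constructor; [right; auto | constructor]]. }
    assert (Hne' : b = true -> [A] <> [] \/ ([] : list tterm) <> []) by (intros; left; discriminate).
    pose proof (multi b B [A] [] B A HPL' HP' Hne' _ _ H1
      (fill Xi (Meta ((zeta ++ [A]) ++ rep 0 [A]) (G1 ++ G2)))
      (RC_refl _ _ _ _ _ Xi _ _ (RM_i Hs (RL_refl B [A] [] B A _)))) as h.
    eapply fill_fix; [exact h | psolve | leq].
Qed.


Inductive GM : meta -> Prop :=
| gm : forall z L, (z <> [] \/ L <> []) -> GL L -> GM (Meta z L)
with GL : list tterm -> Prop :=
| gl_nil : GL []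
| gl_F : forall X L, GL L -> GL (TF X :: L)
| gl_B : forall M L, GM M -> GL L -> GL (TB M :: L).

Lemma GL_app L1 L2 : GL (L1 ++ L2) <-> GL L1 /\ GL L2.
Proof.
  induction L1 as [|[X|M] L1 IH]; simpl; split; intro H.
  - split; auto; constructor.
  - tauto.
  - inversion H; subst. apply IH in H1 as [? ?]. split; auto; constructor; auto.
  - destruct H as [H1 H2]. inversion H1; subst. constructor. apply IH; auto.
  - inversion H; subst. apply IH in H3 as [? ?]. split; auto; constructor; auto.
  - destruct H as [H1 H2]. inversion H1; subst. constructor; auto. apply IH; auto.
Qed.

Lemma GM_fill_in c M : GM (fill c M) -> GM M.
Proof.
  induction c; simpl; auto. intro H; inversion H; subst.
  apply GL_app in H3 as [_ H3]. inversion H3; subst. auto.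
Qed.

Lemma GM_fill_rep c M M' : GM (fill c M) -> GM M' -> GM (fill c M').
Proof.
  induction c; simpl; auto. intros H HM'; inversion H; subst.
  apply GL_app in H3 as [H3 H4]. inversion H4; subst.
  constructor. right; intro E; destruct l; discriminate.
  apply GL_app; split; auto. constructor; auto.
Qed.

Lemma ne_app {T U} (z1 z2 : list T) (D G : list U) :
  (z1 <> [] \/ D <> []) -> (z1 ++ z2 <> [] \/ D ++ G <> []).
Proof.
  intros [H|H]; [left|right]; intro E; apply app_eq_nil in E as [E _]; auto.
Qed.

Ltac gdec := repeat match goal with
  | H : GM (fill _ _) |- _ => apply GM_fill_in in H
  | H : GM (Meta _ _) |- _ => inversion H; subst; clear H
  | H : GM (br _) |- _ => inversion H; subst; clear H
  | H : GL (_ ++ _) |- _ => apply GL_app in H as [? ?]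
  | H : GL (_ :: _) |- _ => inversion H; subst; clear H
  end.
Ltac gbuild := repeat first [ assumption | apply GL_app; split | (right; discriminate) | (left; discriminate) | apply gm | apply gl_nil | apply gl_F | apply gl_B ].
Ltac nel := right; let E := fresh "E" in intro E; repeat (apply app_eq_nil in E as [_ E]); discriminate.

Lemma deriv_good b M C : deriv b M C -> b = true -> GM M.
Proof.
  induction 1; intro Hb; subst b; try discriminate.
  - constructor; [right; discriminate | gbuild].
  - pose proof (IHderiv2 eq_refl) as HF. apply (GM_fill_rep _ _ _ HF).
    pose proof (IHderiv1 eq_refl). gdec. constructor; [nel | gbuild].
  - pose proof (IHderiv eq_refl). gdec. constructor; [ | gbuild]. destruct (H eq_refl); auto.
  - pose proof (IHderiv2 eq_refl) as HF. apply (GM_fill_rep _ _ _ HF).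
    pose proof (IHderiv1 eq_refl). gdec. constructor; [nel | gbuild].

  - pose proof (IHderiv eq_refl). gdec. constructor; [ | gbuild]. destruct (H eq_refl); auto.
  - pose proof (IHderiv eq_refl) as HF. apply (GM_fill_rep _ _ _ HF). gdec. constructor; [nel | gbuild].
  - pose proof (IHderiv1 eq_refl) as H1'. pose proof (IHderiv2 eq_refl). inversion H1'; subst.
    gdec. constructor; [apply ne_app; auto | gbuild].
  - pose proof (IHderiv1 eq_refl) as HF. apply (GM_fill_rep _ _ _ HF). gdec. constructor; [nel | gbuild].
  - auto.
  - auto.
  - pose proof (IHderiv eq_refl) as HF. apply (GM_fill_rep _ _ _ HF). gdec. constructor; [nel | gbuild].
  - pose proof (IHderiv eq_refl) as HF. apply (GM_fill_rep _ _ _ HF). gdec. constructor; [nel | gbuild].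
  - auto.
  - pose proof (IHderiv eq_refl) as HF. apply (GM_fill_rep _ _ _ HF). gdec.
    constructor; [nel | gbuild].
  - pose proof (IHderiv eq_refl) as HF. unfold br in HF. gdec. auto.
  - pose proof (IHderiv eq_refl) as HF. apply (GM_fill_rep _ _ _ HF). gdec.
    constructor; [nel | gbuild].
  - pose proof (IHderiv eq_refl). constructor; [right; discriminate | gbuild].
  - pose proof (IHderiv eq_refl) as HF. apply (GM_fill_rep _ _ _ HF). gdec. constructor; [nel | gbuild].
  - pose proof (IHderiv eq_refl) as HF. apply (GM_fill_rep _ _ _ HF). gdec.
    constructor; [left; intro E; apply app_eq_nil in E as [_ E]; discriminate | gbuild].
  - constructor; [left; discriminate | constructor].
  - pose proof (IHderiv eq_refl) as HF. apply (GM_fill_rep _ _ _ HF). gdec.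
    constructor; [nel | gbuild]. destruct (H eq_refl); auto.
  - pose proof (IHderiv eq_refl) as HF. apply (GM_fill_rep _ _ _ HF). gdec.
    constructor; [ | gbuild]. destruct H3 as [H3|H3]; [left|right]; auto.
    intro E; subst. apply Permutation_sym, Permutation_nil in H. auto.
Qed.

Lemma cut_step b A : (forall X, subf X A -> Cut1 b X) -> Cut1 b A.
Proof.
  intros IH xi Pi Xi zeta G1 G2 C H1 H2.
  apply (cut_from_multi b A xi Pi (PL_lemma b A IH xi Pi H1)); auto.
  intro Hb. pose proof (deriv_good _ _ _ H1 Hb) as HG. inversion HG; subst. tauto.
Qed.

Lemma cut_all b A : Cut1 b A.
Proof.
  induction A; apply cut_step; intros X HX; simpl in HX;
    try contradiction; try (subst; assumption); destruct HX; subst; assumption.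
Qed.


Lemma tt_TB M : tt_onefree (TB M) = meta_onefree M.
  destruct M as [z L]; reflexivity.


Qed.

Lemma mo_fill_in c M : meta_onefree (fill c M) = true -> meta_onefree M = true.
Proof.
  induction c; cbn [fill]; auto. intro H. unfold meta_onefree in H at 1.
  apply andb_true_iff in H as [_ H]. rewrite forallb_app in H.
  apply andb_true_iff in H as [_ H]. cbn [forallb] in H. apply andb_true_iff in H as [H _].
  rewrite tt_TB in H. auto.
Qed.

Lemma mo_fill_rep c M M' : meta_onefree (fill c M) = true -> meta_onefree M' = true ->
  meta_onefree (fill c M') = true.
Proof.
  induction c; cbn [fill]; auto. intros H HM. unfold meta_onefree in H at 1.
  apply andb_true_iff in H as [H0 H]. rewrite forallb_app in H.
  apply andb_true_iff in H as [H1 H]. cbn [forallb] in H. apply andb_true_iff in H as [H H2].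
  rewrite tt_TB in H.
  unfold meta_onefree at 1. rewrite H0, forallb_app, H1; cbn [forallb andb]. rewrite tt_TB, IHc, H2; auto.
Qed.

Theorem theorem1 (restricted : bool) (xi zeta : stoup) (Pi G1 G2 : list tterm)
  (A C : formula) (Xi : ctx) :
  derivable restricted (Meta xi Pi) A ->
  derivable restricted (fill Xi (Meta zeta (G1 ++ TF A :: G2))) C ->
  derivable restricted (fill Xi (Meta (xi ++ zeta) (G1 ++ Pi ++ G2))) C.
Proof.
  unfold derivable. intros [O1 D1] [O2 D2]. split.
  - intro Hr. destruct (O1 Hr) as [M1 _]. destruct (O2 Hr) as [M2 OC].
    split; auto. apply (mo_fill_rep _ _ _ M2).
    apply mo_fill_in in M2. simpl in *.
    rewrite forallb_app in *. repeat rewrite andb_true_iff in *. simpl in *.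
    repeat rewrite andb_true_iff in *. rewrite forallb_app. rewrite andb_true_iff.
    rewrite forallb_app. rewrite andb_true_iff. tauto.
  - exact (cut_all restricted A xi Pi Xi zeta G1 G2 C D1 D2).
Qed.
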